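(* For every $\theta\in\Theta$, the optimality gap satisfies $\Delta(\theta)\le\sqrt{2\log v(\theta)}$, where $v(\theta)=\sup_{\theta'\in\Theta}d_2(p_\theta\|p_{\theta'})$.
   Context: Each $\theta\in\Theta$ defines a policy of an MDP inducing a trajectory distribution $p_\theta$; the return satisfies $\mathcal R(\tau)\in[0,1]$, $J(\theta)=\mathbb E_{\tau\sim p_\theta}[\mathcal R(\tau)]$, $J^*=\sup_{\theta}J(\theta)$ and $\Delta(\theta)=J^*-J(\theta)$. For probability measures $P\ll Q$, $d_2(P\|Q)=\int(\frac{dP}{dQ})^2dQ$ ($+\infty$ if $P\not\ll Q$). *)

(* Defs.v *)
From HB Require Import structures.
From mathcomp Require Import all_boot all_order all_algebra.
From mathcomp Require Import all_classical all_reals all_analysis.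
Set Implicit Arguments. Unset Strict Implicit. Unset Printing Implicit Defensive.
Import Order.TTheory GRing.Theory Num.Theory.
Local Open Scope classical_set_scope.
Local Open Scope ring_scope.
Local Open Scope ereal_scope.
Local Open Scope charge_scope.

Definition d2 (d : measure_display) (T : measurableType d) (R : realType)
  (P Q : probability T R) : \bar R :=
  if pselect (P `<< Q) is left _ then
    \int[Q]_x (('d (charge_of_finite_measure P) '/d Q) x *
               ('d (charge_of_finite_measure P) '/d Q) x)
  else +oo.

Definition Jret (d : measure_display) (T : measurableType d) (R : realType)
  (Theta : Type) (p : Theta -> probability T R) (Rw : T -> R) (th : Theta)
  : \bar R := \int[p th]_t (Rw t)%:E.

Definition Jstar (d : measure_display) (T : measurableType d) (R : realType)
  (Theta : Type) (p : Theta -> probability T R) (Rw : T -> R) : \bar R :=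
  ereal_sup (range (Jret p Rw)).

Definition gap (d : measure_display) (T : measurableType d) (R : realType)
  (Theta : Type) (p : Theta -> probability T R) (Rw : T -> R) (th : Theta)
  : \bar R := Jstar p Rw - Jret p Rw th.

Definition vdiv (d : measure_display) (T : measurableType d) (R : realType)
  (Theta : Type) (p : Theta -> probability T R) (th : Theta) : \bar R :=
  ereal_sup (range (fun th' => d2 (p th) (p th'))).

(* sqrt(2 log v) extended to \bar R: +oo at +oo. (v >= 1 always, so the
   -oo branch and values below 1 never occur.) *)
Definition sqrt2log (R : realType) (v : \bar R) : \bar R :=
  match v with
  | r%:E => (Num.sqrt (2 * ln r))%:E
  | +oo => +oo
  | -oo => 0
  end.

(* Main.v *)
Require Import Defs.
From HB Require Import structures.
From mathcomp Require Import all_boot all_order all_algebra.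
From mathcomp Require Import all_classical all_reals all_analysis.
From mathcomp Require Import ring lra.
Import Order.TTheory GRing.Theory Num.Theory.
Local Open Scope classical_set_scope.
Local Open Scope ring_scope.
Local Open Scope ereal_scope.
Local Open Scope charge_scope.
Import measurable_realfun.

Lemma ptwise (R : realType) (f G a : R) : (0 <= f <= 1)%R -> (0 < a)%R ->
  (f + a^-1 * G <= f * G + ((2 * a)^-1 * G ^+ 2 + ((2 * a)^-1 + a / 2)))%R.
Proof.
move=> /andP[f0 f1] a0.
have ai : (a * a^-1 = 1)%R by rewrite divff // gt_eqF.
have a2 : ((2 * a)^-1 = a^-1 / 2)%R by rewrite invfM mulrC.
rewrite a2.
have h : (0 <= (1 - G - a * f) ^+ 2 + a ^+ 2 * (1 - f ^+ 2))%R.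
  apply: addr_ge0; first exact: sqr_ge0.
  apply: mulr_ge0; first exact: sqr_ge0.
  by rewrite subr_ge0 expr2 mulr_ile1.
rewrite -subr_ge0.
have -> : (f * G + (a^-1 / 2 * G ^+ 2 + (a^-1 / 2 + a / 2)) - (f + a^-1 * G) =
   ((1 - G - a * f) ^+ 2 + a ^+ 2 * (1 - f ^+ 2)) * (a^-1 / 2))%R.
  by field; rewrite gt_eqF.
by apply: mulr_ge0 => //; rewrite divr_ge0 // invr_ge0 ltW.
Qed.

Lemma key {d} {T : measurableType d} {R : realType} {P Q : probability T R}
  {f : T -> R} (mf : measurable_fun setT f) (f01 : forall t, (0 <= f t <= 1)%R)
  {r a : R} (a0 : (0 < a)%R) : d2 P Q = r%:E ->
  \int[Q]_x (f x)%:E + (a^-1)%:E <=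
  \int[P]_x (f x)%:E + ((2 * a)^-1 * r + ((2 * a)^-1 + a / 2))%:E.
Proof.
rewrite /d2; case: pselect => // PQ hd.
set g := 'd _ '/d _ in hd.
have gfin x : g x \is a fin_num by exact: Radon_Nikodym_fin_num.
pose G x := fine (g x).
have gG : g = fun x => (G x)%:E by apply/funext => x; rewrite /G fineK.
have intG : Q.-integrable setT (fun x => (G x)%:E).
  by rewrite -gG; exact: Radon_Nikodym_integrable.
have intG1 : \int[Q]_x (G x)%:E = 1.
  by rewrite -gG -Radon_Nikodym_integral //= probability_setT.
have mG : measurable_fun setT G.
  by apply/measurable_EFinP; exact: (measurable_int _ intG).
have hd' : \int[Q]_x (G x ^+ 2)%:E = r%:E.
  by rewrite -hd gG; apply: eq_integral => x _; rewrite expr2 EFinM.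
have intG2 : Q.-integrable setT (fun x => (G x ^+ 2)%:E).
  apply/integrableP; split.
    by apply/measurable_EFinP; exact: measurable_funX.
  under eq_integral => x _ do rewrite gee0_abs ?lee_fin ?sqr_ge0 //.
  by rewrite hd' ltry.
have intfQ : Q.-integrable setT (fun x => (f x)%:E).
  apply: (le_integrable measurableT _ _ (@finite_measure_integrable_cst _ _ _ _ setT 1%R measurableT)).
    exact/measurable_EFinP.
  move=> x _ /=; rewrite lee_fin ger0_norm ?normr1; by case/andP: (f01 x).
have intfP : P.-integrable setT (fun x => (f x)%:E).
  apply: (le_integrable measurableT _ _ (@finite_measure_integrable_cst _ _ _ _ setT 1%R measurableT)).
    exact/measurable_EFinP.
  move=> x _ /=; rewrite lee_fin ger0_norm ?normr1; by case/andP: (f01 x).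
have intfG : Q.-integrable setT (fun x => (f x * G x)%:E).
  apply: (le_integrable measurableT _ _ intG).
    by apply/measurable_EFinP; exact: measurable_funM.
  move=> x _ /=; case/andP: (f01 x) => h0 h1; by rewrite lee_fin normrM ler_piMl // ger0_norm.
have cv : \int[Q]_x (f x * G x)%:E = \int[P]_x (f x)%:E.
  rewrite -(Radon_Nikodym_change_of_variables PQ measurableT intfP).
  by apply: eq_integral => y _; rewrite -/g gG EFinM.
set c := ((2 * a)^-1 + a / 2)%R.
have intZG := integrableZl measurableT (a^-1)%R intG.
have intZG2 := integrableZl measurableT ((2 * a)^-1)%R intG2.
have intc := @finite_measure_integrable_cst _ _ _ Q setT c measurableT.
have L : \int[Q]_x ((f x)%:E + (a^-1)%:E * (G x)%:E) = \int[Q]_x (f x)%:E + (a^-1)%:E.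
  by rewrite (integralD measurableT intfQ intZG) integralZl // intG1 mule1.
have intR2 : Q.-integrable setT (fun x => ((2 * a)^-1)%:E * (G x ^+ 2)%:E + c%:E).
  exact: (integrableD measurableT intZG2 intc).
have Rr : \int[Q]_x ((f x * G x)%:E + (((2 * a)^-1)%:E * (G x ^+ 2)%:E + c%:E)) =
    \int[P]_x (f x)%:E + ((2 * a)^-1 * r + c)%:E.
  rewrite (integralD measurableT intfG intR2) cv.
  rewrite (integralD measurableT intZG2 intc) integralZl // hd'.
  rewrite (integral_cst Q measurableT c%:E).
  rewrite (_ : ((2 * a)^-1 * r + c)%:E = ((2 * a)^-1)%:E * r%:E + c%:E * 1); last by rewrite mule1 EFinD EFinM.
  congr (_ + (_ + (_ * _))); exact: probability_setT.
have H : \int[Q]_x ((f x)%:E + (a^-1)%:E * (G x)%:E) <=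
    \int[Q]_x ((f x * G x)%:E + (((2 * a)^-1)%:E * (G x ^+ 2)%:E + c%:E)).
  apply: (le_integral measurableT).
  - exact: (integrableD measurableT intfQ intZG).
  - exact: (integrableD measurableT intfG intR2).
  - by move=> x _; rewrite -!EFinM -!EFinD lee_fin; exact: ptwise.
by move: H; rewrite L Rr.
Qed.

Local Open Scope ring_scope.
Lemma ln_lb {R : realType} (r : R) : 0 < r -> 1 - r^-1 <= ln r.
Proof.
move=> r0.
have ri : 0 < r^-1 by rewrite invr_gt0.
have h : 1 + ln (r^-1) <= r^-1.
  by rewrite -[X in _ <= X](lnK (x:=r^-1)) ?posrE // expR_ge1Dx.
rewrite lnV ?posrE // in h; lra.
Qed.

Lemma final {R : realType} {j j' r' r : R} : 0 <= j -> j' <= 1 -> r' <= r ->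
  0 < j' - j ->
  j' + (j' - j)^-1 <= j + ((2 * (j' - j))^-1 * r' + ((2 * (j' - j))^-1 + (j' - j) / 2)) ->
  j' <= j + Num.sqrt (2 * ln r).
Proof.
move=> j0 j1 rr D0.
set D := j' - j => h.
have hD : D ^+ 2 <= r' - 1.
  have : 0 <= j + ((2 * D)^-1 * r' + ((2 * D)^-1 + D / 2)) - (j' + D^-1) by rewrite subr_ge0.
  have -> : j + ((2 * D)^-1 * r' + ((2 * D)^-1 + D / 2)) - (j' + D^-1) =
    (r' - 1 - D ^+ 2) / (2 * D).
    rewrite /D; field; rewrite gt_eqF //.
  by rewrite pmulr_lge0 ?invr_gt0 ?mulr_gt0 // subr_ge0 lerBrDl addrC.
have D1 : D <= 1 by rewrite /D; lra.
have r1 : 1 < r.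
  have : 0 < D ^+ 2 by rewrite exprn_gt0.
  lra.
have r0 : 0 < r by lra.
have lb := @ln_lb R r r0.
have H2 : D ^+ 2 <= 2 * ln r.
  have [r2|r2] := leP r 2.
  - have : r - 1 <= 2 * (1 - r^-1).
      have -> : 2 * (1 - r^-1) = (r - 1) * (2 / r) by field; rewrite gt_eqF.
      rewrite -subr_ge0.
      have -> : (r - 1) * (2 / r) - (r - 1) = (r - 1) * (2 - r) / r by field; rewrite gt_eqF.
      by apply: divr_ge0; [apply: mulr_ge0; rewrite subr_ge0 //; exact: ltW | exact: ltW].
    lra.
  - have : 1 <= 2 * (1 - r^-1).
      have : r^-1 <= 2^-1 by rewrite lef_pV2 ?posrE ?ltW // ?(lt_trans _ r2).
      lra.
    have : D ^+ 2 <= 1 by rewrite expr_le1 // ltW.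
    lra.
have -> : j' = j + D by rewrite /D; ring.
rewrite lerD2l -[X in X <= _](@ger0_norm _ D) ?(ltW D0) // -sqrtr_sqr ler_sqrt //.
exact: le_trans (sqr_ge0 D) H2.
Qed.

Local Open Scope ereal_scope.
Lemma d2_ge0 {d} {T : measurableType d} {R : realType} (P Q : probability T R) :
  0 <= d2 P Q.
Proof.
rewrite /d2; case: pselect => // PQ; apply: integral_ge0 => x _.
have gfin := Radon_Nikodym_fin_num (nu := charge_of_finite_measure P) (mu := Q) x PQ.
by rewrite -(fineK gfin) -EFinM lee_fin -expr2 sqr_ge0.
Qed.

Theorem lemma5 (d : measure_display) (T : measurableType d) (R : realType)
  (Theta : Type) (p : Theta -> probability T R) (Rw : T -> R)
  (mRw : measurable_fun setT Rw)
  (Rw01 : forall t, (0 <= Rw t <= 1)%R) (th : Theta) :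
  gap p Rw th <= sqrt2log (vdiv p th).
Proof.
have intRw (P : probability T R) : P.-integrable setT (fun x => (Rw x)%:E).
  apply: (le_integrable measurableT _ _ (@finite_measure_integrable_cst _ _ _ _ setT 1%R measurableT)).
    exact/measurable_EFinP.
  move=> x _ /=; rewrite lee_fin ger0_norm ?normr1; by case/andP: (Rw01 x).
have Jb th' : 0 <= Jret p Rw th' <= 1.
  rewrite /Jret; apply/andP; split.
    by apply: integral_ge0 => x _; rewrite lee_fin; case/andP: (Rw01 x).
  apply: le_trans (le_integral measurableT (intRw _)
     (@finite_measure_integrable_cst _ _ _ (p th') setT 1%R measurableT) _) _.
    by move=> x _ /=; rewrite lee_fin; case/andP: (Rw01 x).
  rewrite (_ : \int[p th']_x (EFin \o cst 1%R) x = \int[p th']_x (cst 1%E) x) //.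
  rewrite integral_cst // mul1e (_ : _ [set: T] = 1) //; exact: probability_setT.
have Jfin th' : Jret p Rw th' = (fine (Jret p Rw th'))%:E.
  case/andP: (Jb th') => h0 h1.
  by rewrite fineK // ge0_fin_numE // (le_lt_trans h1) // ltry.
rewrite /gap.
have v0 : 0 <= vdiv p th.
  have h1 := d2_ge0 (p th) (p th).
  have h2 : d2 (p th) (p th) <= vdiv p th by apply: ereal_sup_ubound; exists th.
  exact: le_trans h1 h2.
case E: (vdiv p th) v0 => [r| |] v0 //=; last by rewrite leey.
have [j Ej] : exists j, Jret p Rw th = j%:E := ex_intro _ _ (Jfin th).
have := Jb th; rewrite Ej !lee_fin => /andP[j0 j1].
rewrite leeBlDr //.
apply: ge_ereal_sup => _ [th' _ <-].
have [j' Ej'] : exists j', Jret p Rw th' = j'%:E := ex_intro _ _ (Jfin th').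
have := Jb th'; rewrite Ej' !lee_fin => /andP[j0' j1'].
have dle : d2 (p th) (p th') <= r%:E.
  rewrite -E; apply: ereal_sup_ubound; by exists th'.
have := d2_ge0 (p th) (p th').
case E2: (d2 (p th) (p th')) dle => [r'| |] //; rewrite lee_fin => rr _.
rewrite addrC.
have [D0|D0] := leP (j' - j)%R 0%R.
  have := sqrtr_ge0 (2 * ln r)%R; lra.
have := key mRw Rw01 D0 E2.
rewrite /Jret in Ej Ej'; rewrite Ej Ej' -!EFinD lee_fin => h.
exact: final j0 j1' rr D0 h.
Qed.
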